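(* Consider a platform with effective driver arrival rate $e>0$, driver abandonment rate $\beta>0$, static price $\phi_i\in[0,\phi_h]$, and passenger arrival rate $\lambda_i(\beta)\ge0$, where $\lambda_i(\beta)\to\lambda_i$ as $\beta\to0$. Let $\mathcal D_i(\phi_i;\lambda_i(\beta),\beta)=\bigl(\sum_{n\ge0}\frac{e^n}{\prod_{a=1}^n(\lambda_i(\beta)f(\phi_i)+a\beta)}\bigr)^{-1}$ and $\mathcal M_i(\phi_i;\lambda_i(\beta),\beta)=\lambda_i(\beta)f(\phi_i)\phi_i\bigl(1-\mathcal D_i(\phi_i;\lambda_i(\beta),\beta)\bigr)$. Then as $\beta\to0$, $$\mathcal M_i\to\tilde{\mathcal M}_i(\phi_i)=\begin{cases}e\phi_i&\text{if } \frac{e}{\lambda_i f(\phi_i)}<1,\\ \lambda_i f(\phi_i)\phi_i&\text{otherwise,}\end{cases}\qquad \mathcal D_i\to\tilde{\mathcal D}_i(\phi_i;\lambda_i)=\Bigl(1-\frac{e}{\lambda_i f(\phi_i)}\Bigr)^+.$$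
   Context: $f:[0,\phi_h]\to(0,1]$ is strictly concave, strictly decreasing, differentiable with $f(0)=1$ (passenger acceptance probability of price $\phi$). $\mathcal D_i$ is the stationary probability of no waiting driver and $\mathcal M_i$ the long-run matching revenue rate of a platform where passengers arrive Poisson at rate $\lambda_i(\beta)$ and drivers (effective rate $e$) wait and abandon at rate $\beta$. Convention: $e/0=+\infty$. *)

(* Defs.v *)
From HB Require Import structures.
From mathcomp Require Import all_boot all_order all_algebra.
From mathcomp Require Import all_classical all_reals all_analysis.
Set Implicit Arguments. Unset Strict Implicit. Unset Printing Implicit Defensive.
Import Order.TTheory GRing.Theory Num.Theory.
Import numFieldNormedType.Exports.
Local Open Scope classical_set_scope.
Local Open Scope ring_scope.

Definition Dterm {R : realType} (f : R -> R) (e phi lam beta : R) (n : nat) : R :=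
  e ^+ n / \prod_(1 <= a < n.+1) (lam * f phi + a%:R * beta).

Definition Dcal {R : realType} (f : R -> R) (e phi lam beta : R) : R :=
  (limn (series (Dterm f e phi lam beta)))^-1.

Definition Mcal {R : realType} (f : R -> R) (e phi lam beta : R) : R :=
  lam * f phi * phi * (1 - Dcal f e phi lam beta).

(* limits; convention e/0 = +oo, encoded by the case lam * f phi = 0 *)
Definition Mtilde {R : realType} (f : R -> R) (e phi lam : R) : R :=
  if (lam * f phi != 0) && (e / (lam * f phi) < 1) then e * phi
  else lam * f phi * phi.

Definition Dtilde {R : realType} (f : R -> R) (e phi lam : R) : R :=
  if lam * f phi == 0 then 0 else Num.max 0 (1 - e / (lam * f phi)).

(* Main.v *)
Require Import Defs.
From HB Require Import structures.
From mathcomp Require Import all_boot all_order all_algebra.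
From mathcomp Require Import all_classical all_reals all_analysis.
From mathcomp Require Import ring lra.
Import Order.TTheory GRing.Theory Num.Theory.
Import numFieldNormedType.Exports.
Local Open Scope classical_set_scope.
Local Open Scope ring_scope.

Section Ser.
Variable R : realType.
Variables (e c b : R).
Hypotheses (e0 : 0 < e) (c0 : 0 <= c) (b0 : 0 < b).

Definition tt (n : nat) : R := e ^+ n / \prod_(1 <= a < n.+1) (c + a%:R * b).

Lemma prod_gt0 n : 0 < \prod_(1 <= a < n.+1) (c + a%:R * b).
Proof.
rewrite big_nat_cond; apply: prodr_gt0 => a /andP[/andP[a1 _] _].
apply: (le_lt_trans c0); rewrite ltrDl mulr_gt0 ?ltr0n //.
Qed.

Lemma tt_ge0 n : 0 <= tt n.
Proof. by rewrite /tt divr_ge0 ?exprn_ge0 ?ltW ?prod_gt0. Qed.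

Lemma tt0 : tt 0 = 1.
Proof. by rewrite /tt big_geq // expr0 divr1. Qed.

Lemma ttS n : tt n.+1 * (c + n.+1%:R * b) = e * tt n.
Proof.
rewrite /tt big_nat_recr //= exprS invfM.
have h1 := prod_gt0 n.
have h2 : 0 < c + n.+1%:R * b by apply: (le_lt_trans c0); rewrite ltrDl mulr_gt0.
field; rewrite (gt_eqF h1) /= -[1 + _]addrC natr1 gt_eqF //.
Qed.

Lemma Dpos n : 0 < c + n.+1%:R * b.
Proof. by apply: (le_lt_trans c0); rewrite ltrDl mulr_gt0. Qed.

Lemma ttS' n : tt n.+1 = e * tt n / (c + n.+1%:R * b).
Proof. by rewrite -ttS mulrK // unitf_gt0 // Dpos. Qed.

Lemma tt_le_exp n : tt n <= exp_coeff (e/b) n.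
Proof.
elim: n => [|n IH]; first by rewrite tt0 /exp_coeff /= expr0 divr1.
have -> : exp_coeff (e/b) n.+1 = e * exp_coeff (e/b) n / (n.+1%:R * b).
  rewrite /exp_coeff /= exprS factS natrM; field.
  by rewrite gt_eqF //= addrC natr1 !pnatr_eq0 /= -lt0n fact_gt0.
rewrite ttS'; apply: (@le_trans _ _ (e * exp_coeff (e/b) n / (c + n.+1%:R*b))).
  by rewrite ler_pM2r ?invr_gt0 ?Dpos // ler_pM2l.
have hE : 0 <= exp_coeff (e/b) n by rewrite exp_coeff_ge0 // divr_ge0 // ltW.
rewrite ler_wpM2l //; last first.
rewrite lef_pV2 ?posrE ?Dpos ?mulr_gt0 ?ltr0n //.
  by rewrite lerDr.
exact: (mulr_ge0 (ltW e0) hE).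
Qed.

Lemma tt_cvg : cvgn (series tt).
Proof.
apply: (series_le_cvg tt_ge0 _ tt_le_exp (is_cvg_series_exp_coeff _)).
by move=> n; rewrite exp_coeff_ge0 // divr_ge0 ?ltW.
Qed.

Definition P n := \sum_(0 <= k < n) tt k.
Definition T n := \sum_(0 <= k < n) k%:R * tt k.

Lemma ident1 N : (c - e) * P N.+1 = c - b * T N.+1 - e * tt N.
Proof.
rewrite /P /T; elim: N => [|N IH].
  by rewrite !big_nat1 tt0 mul0r mulr1 mulr0 subr0 mulr1.
rewrite big_nat_recr //= [X in _ - b * X - _]big_nat_recr //= mulrDr IH.
have := ttS N; move: (tt N.+1) (tt N) => x y; lra.
Qed.

Lemma ineq2 N : (c - e) * T N.+1 + e * N.+1%:R * tt N <= e * P N.+1.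
Proof.
rewrite /P /T; elim: N => [|N IH].
  by rewrite !big_nat1 tt0 mul0r mulr0 add0r !mulr1.
rewrite big_nat_recr //= [X in _ <= e * X]big_nat_recr //= mulrDr.
have := ttS N; have := tt_ge0 N.+1.
move: (tt N.+1) (tt N) IH => x y IH h1 h2.
have hN : 0 <= N%:R :> R by [].
rewrite -!natr1 in h2 IH *.
move: (\sum_(0 <= i < N.+1) i%:R * tt i) (\sum_(0 <= i < N.+1) tt i) IH => s1 s2 IH.
have h3 : (N%:R + 1) * (x * (c + (N%:R + 1) * b)) = (N%:R + 1) * (e * y) by rewrite h2.
have h4 : 0 <= (N%:R+1)*((N%:R+1)*(b*x)) by rewrite !mulr_ge0 // ?addr_ge0 // ltW.
nra.
Qed.


Definition S := limn (series tt).

Lemma P_le_S n : P n <= S.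
Proof.
apply: (nondecreasing_cvgn_le _ tt_cvg).
by apply: (@nondecreasing_series _ tt predT 0) => k _ _; apply: tt_ge0.
Qed.

Lemma P1 : P 1 = 1.
Proof. by rewrite /P big_nat1 tt0. Qed.

Lemma S_ge1 : 1 <= S.
Proof. by rewrite -P1 P_le_S. Qed.

Lemma T_ge0 n : 0 <= T n.
Proof. by rewrite /T sumr_ge0 // => k _; rewrite mulr_ge0 ?tt_ge0. Qed.

Lemma P_ge0 n : 0 <= P n.
Proof. by rewrite /P sumr_ge0 // => k _; rewrite tt_ge0. Qed.

Lemma S_upper : e < c -> (c - e) * S <= c.
Proof.
move=> ce; have ce0 : 0 < c - e by rewrite subr_gt0.
rewrite -ler_pdivlMl // mulrC.
apply: limr_le; first exact: tt_cvg.
apply: nearW => -[|N]; first by rewrite /series /= big_geq // divr_ge0 // ltW.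
rewrite ler_pdivlMr //.
have := ident1 N; have := T_ge0 N.+1; have := tt_ge0 N.
rewrite /series /= -/(P N.+1).
have := b0; have := e0.
move: (P N.+1) (T N.+1) (tt N) => p t x; nra.
Qed.

Lemma S_lower : e < c -> c <= (c - e + b * e / (c - e)) * S.
Proof.
move=> ce; have ce0 : 0 < c - e by rewrite subr_gt0.
have hc : (fun N => c - e * tt N) @ \oo --> c - e * 0.
  apply: cvgB; first exact: cvg_cst.
  apply: cvgM; first exact: cvg_cst.
  exact: cvg_series_cvg_0 tt_cvg.
rewrite mulr0 subr0 in hc.
apply: (cvgr_to_le hc); apply: nearW => N.
have h1 := ident1 N; have h2 := ineq2 N; have h3 := P_le_S N.+1.
have h4 := tt_ge0 N; have h5 := T_ge0 N.+1; have h6 := P_ge0 N.+1.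
have hg : 0 <= b * e / (c - e) by rewrite divr_ge0 ?mulr_ge0 ?ltW.
have hT : T N.+1 <= e * P N.+1 / (c - e).
  rewrite ler_pdivlMr // mulrC.
  apply: le_trans h2; rewrite lerDl; apply: mulr_ge0; last exact: tt_ge0.
  by apply: mulr_ge0; [apply: ltW|].
have hbT : b * T N.+1 <= b * e / (c - e) * P N.+1.
  rewrite (_ : b * e / (c - e) * P N.+1 = b * (e * P N.+1 / (c - e))).
    by rewrite ler_wpM2l // ltW.
  by field; rewrite gt_eqF.
apply: (@le_trans _ _ ((c - e + b * e / (c - e)) * P N.+1)).
  move: hbT h1; move: (b * e / (c - e)) (P N.+1) (T N.+1) (tt N) => g p t x; nra.
by rewrite ler_wpM2l // addr_ge0 // ltW.
Qed.

End Ser.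
Arguments tt {R}. Arguments S_ge1 {R e c b}. Arguments S_upper {R e c b}. Arguments S_lower {R e c b}. Arguments S {R}. Arguments P {R}. Arguments T {R}.

Lemma tt_anti (R : realType) (e c c' b : R) n : 0 < e -> 0 <= c -> c <= c' -> 0 < b ->
  tt e c' b n <= tt e c b n.
Proof.
move=> e0 c0 cc b0; rewrite /tt; apply: ler_wpM2l; first by rewrite exprn_ge0 // ltW.
rewrite lef_pV2 ?posrE ?prod_gt0 //; last exact: le_trans cc.
rewrite big_nat_cond [X in _ <= X]big_nat_cond; apply: ler_prod => a _.
by rewrite lerD2r cc andbT addr_ge0 // mulr_ge0 // ltW.
Qed.

Lemma S_anti (R : realType) (e c c' b : R) : 0 < e -> 0 <= c -> c <= c' -> 0 < b ->
  S e c' b <= S e c b.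
Proof.
move=> e0 c0 cc b0; have c0' := le_trans c0 cc.
apply: ler_lim; [exact: tt_cvg | exact: tt_cvg |].
apply: nearW => n; rewrite /series /=; apply: ler_sum => k _; exact: tt_anti.
Qed.

Lemma aux1 (R : realType) (x y z : R) : 0 < y -> 0 < z -> x * z <= y -> x / y <= z^-1.
Proof. by move=> y0 z0 h; rewrite ler_pdivrMr // mulrC ler_pdivlMr. Qed.

Lemma aux2 (R : realType) (x y z : R) : 0 < y -> 0 < z -> y <= x * z -> z^-1 <= x / y.
Proof. by move=> y0 z0 h; rewrite ler_pdivlMr // mulrC ler_pdivrMr. Qed.

Lemma Dlim (R : realType) (e c0 : R) (c : R -> R) : 0 < e ->
  (forall b, 0 < b -> 0 <= c b) -> c b @[b --> 0^'+] --> c0 ->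
  (S e (c b) b)^-1 @[b --> 0^'+] --> (if e < c0 then (c0 - e) / c0 else 0).
Proof.
move=> e0 cpos hc.
case: ifPn => [ce|].
  have c00 : 0 < c0 by apply: lt_trans ce.
  apply: (@squeeze_cvgr _ _ _ _ (fun b => (c b - e) / c b)
     (fun b => (c b - e + b * e / (c b - e)) / c b)).
    near=> b.
    have b0 : 0 < b by near: b; exact: nbhs_right_gt.
    have cb : e < c b by near: b; exact: (cvgr_gt _ hc _ ce).
    have cb0 : 0 < c b by apply: lt_trans cb.
    have s1 := S_ge1 e0 (ltW cb0) b0.
    have s0 : 0 < S e (c b) b by apply: lt_le_trans s1.
    apply/andP; split.
      by apply: aux1 => //; apply: S_upper => //; apply: ltW.
    by apply: aux2 => //; apply: S_lower => //; apply: ltW.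
  - apply: cvgM; first by apply: cvgB; [exact: hc | exact: cvg_cst].
    by apply: cvgV; [rewrite gt_eqF | exact: hc].
  - have -> : (c0 - e) / c0 = (c0 - e + 0 * e / (c0 - e)) / c0 by rewrite mul0r mul0r addr0.
    apply: cvgM; last by apply: cvgV; [rewrite gt_eqF | exact: hc].
    apply: cvgD; first by apply: cvgB; [exact: hc | exact: cvg_cst].
    apply: cvgM; first apply: cvgM.
    + by apply: cvg_at_right_filter; exact: cvg_id.
    + exact: cvg_cst.
    apply: cvgV; first by rewrite gt_eqF // subr_gt0.
    by apply: cvgB; [exact: hc | exact: cvg_cst].
rewrite -leNgt => ce.
apply/cvgrPdist_le => eps eps0.
set d := e * eps / 2.
have d0 : 0 < d by rewrite divr_gt0 // mulr_gt0.
have hlt : \forall b \near 0^'+, c b < e + d.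
  by apply: (cvgr_lt _ hc); apply: le_lt_trans ce _; rewrite ltrDl.
near=> b.
have b0 : 0 < b by near: b; exact: nbhs_right_gt.
have hb : b < d ^+ 2 / e by near: b; apply: nbhs_right_lt; rewrite divr_gt0 // exprn_gt0.
have cl : c b < e + d by near: b.
have ed0 : 0 <= e + d by rewrite addr_ge0 // ltW.
have s1 := @S_anti _ _ _ _ _ e0 (cpos b b0) (ltW cl) b0.
have s2 := S_lower e0 ed0 b0 (_ : e < e + d).
rewrite ltrDl in s2; have {}s2 := s2 d0.
have s3 := S_ge1 e0 ed0 b0.
move: s1 s2 s3; set s' := S e (e + d) b; set s := S e (c b) b => s1 s2 s3.
have sp : 0 < s by apply: lt_le_trans s1; apply: lt_le_trans s3.
rewrite sub0r normrN ger0_norm; last by rewrite invr_ge0 ltW.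
have ede : e + d - e = d by rewrite addrC addKr.
rewrite ede in s2.
have hg : b * e / d <= d.
  rewrite ler_pdivrMr // -expr2 -ler_pdivlMr //; exact: ltW.
have h2 : e <= e * eps * s'.
  have : e + d <= (d + d) * s'.
    apply: (le_trans s2); rewrite ler_wpM2r ?(le_trans _ s3) //.
    by rewrite lerD2l.
  have -> : d + d = e * eps by rewrite /d; field.
  by move=> h; apply: le_trans h; rewrite lerDl ltW.
have h3 : 1 <= eps * s.
  apply: (le_trans _ (_ : eps * s' <= eps * s)); last by rewrite ler_wpM2l // ltW.
  by rewrite -(ler_pM2l e0) mulr1 mulrA.
by rewrite -div1r ler_pdivrMr // mulrC.
Unshelve. all: by end_near.
Qed.

Theorem lemma4 (R : realType) (f : R -> R) (phi_h e phi lam0 : R) (lam : R -> R) :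
  0 < phi_h ->
  (* f : [0, phi_h] -> (0,1] *)
  (forall x, 0 <= x <= phi_h -> 0 < f x <= 1) ->
  f 0 = 1 ->
  (* strictly decreasing on [0, phi_h] *)
  (forall x y, 0 <= x -> x < y -> y <= phi_h -> f y < f x) ->
  (* strictly concave on [0, phi_h] *)
  (forall x y t, 0 <= x <= phi_h -> 0 <= y <= phi_h -> x != y -> 0 < t < 1 ->
     t * f x + (1 - t) * f y < f (t * x + (1 - t) * y)) ->
  (* differentiable on [0, phi_h] (one-sided at the endpoints) *)
  {within `[0, phi_h], continuous f} ->
  (forall x, 0 < x < phi_h -> derivable f x 1) ->
  0 < e ->
  0 <= phi <= phi_h ->
  (forall beta, 0 < beta -> 0 <= lam beta) ->
  lam x @[x --> 0^'+] --> lam0 ->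
  Mcal f e phi (lam beta) beta @[beta --> 0^'+] --> Mtilde f e phi lam0 /\
  Dcal f e phi (lam beta) beta @[beta --> 0^'+] --> Dtilde f e phi lam0.
Proof.
move=> _ frng _ _ _ _ _ e0 phir lampos hlam.
have fp0 : 0 < f phi by case/andP: (frng _ phir).
have hc : lam b * f phi @[b --> 0^'+] --> lam0 * f phi.
  by apply: cvgM; [exact: hlam | exact: cvg_cst].
have cpos : forall b, 0 < b -> 0 <= lam b * f phi.
  by move=> b b0; rewrite mulr_ge0 ?lampos // ltW.
have hD := @Dlim _ _ _ _ e0 cpos hc.
set c0 := lam0 * f phi in hc hD.
set Dl := (if e < c0 then (c0 - e) / c0 else 0) in hD.
have c00 : 0 <= c0.
  apply: (cvgr_to_ge hc); near=> b; apply: cpos.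
  by near: b; exact: nbhs_right_gt.
have hM : lam b * f phi * phi * (1 - (S e (lam b * f phi) b)^-1) @[b --> 0^'+]
    --> c0 * phi * (1 - Dl).
  apply: cvgM; first by apply: cvgM; [exact: hc | exact: cvg_cst].
  by apply: cvgB; [exact: cvg_cst | exact: hD].
split.
  have -> : Mtilde f e phi lam0 = c0 * phi * (1 - Dl).
    rewrite /Mtilde -/c0 /Dl; case: (ltrP e c0) => ce.
      have c0p : 0 < c0 := lt_trans e0 ce.
      have c0n : c0 != 0 by rewrite gt_eqF.
      rewrite c0n /= ltr_pdivrMr // mul1r ce /=; field; exact: c0n.
    rewrite subr0 mulr1; case: eqP => //= c0n.
    have c0p : 0 < c0 by rewrite lt0r c00 andbT; apply/eqP.
    by rewrite ltr_pdivrMr // mul1r ltNge ce.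
  exact: hM.
have -> : Dtilde f e phi lam0 = Dl.
  rewrite /Dtilde -/c0 /Dl; case: (ltrP e c0) => ce.
    have c0p : 0 < c0 := lt_trans e0 ce.
    rewrite gt_eqF // max_r.
      by field; rewrite gt_eqF.
    by rewrite subr_ge0 ler_pdivrMr // mul1r ltW.
  case: eqP => // c0n.
  have c0p : 0 < c0 by rewrite lt0r c00 andbT; apply/eqP.
  by rewrite max_l // subr_le0 ler_pdivlMr // mul1r.
exact: hD.
Unshelve. all: by end_near.
Qed.
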